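(* Let $X$ be a topological space and $K$, $L$ complete non-Archimedean valued fields (not necessarily containing a common subfield, e.g. $\mathbb Q_p$ and $\mathbb Q_l$). Then there exists a unique homeomorphism $\mathrm{BSC}_K(X)\cong\mathrm{BSC}_L(X)$ compatible with the evaluation maps from $X$. In particular, for an extension $K/k$ of complete valued fields, the map $\mathrm{BSC}_K(X)\to\mathrm{BSC}_k(X)$ induced by restriction along the inclusion $C_{bd}(X,k)\hookrightarrow C_{bd}(X,K)$ is a homeomorphism.
   Context: Complete valued fields are fields complete with respect to a non-Archimedean absolute value of rank one (possibly trivial). $C_{bd}(X,k)$ is the $k$-algebra of bounded continuous functions $X\to k$ with the supremum norm. $\mathrm{BSC}_k(X)$ is the Berkovich spectrum of $C_{bd}(X,k)$: bounded multiplicative seminorms on it extending $|\cdot|$ on $k$, with the weakest topology making all $x\mapsto|f|_x$ continuous; the evaluation map is $X\to\mathrm{BSC}_k(X)$, $x\mapsto(f\mapsto|f(x)|)$. *)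

(* Defs.v *)
From HB Require Import structures.
From mathcomp Require Import all_boot all_algebra.
From Stdlib Require Import Reals List.
Set Implicit Arguments. Unset Strict Implicit. Unset Printing Implicit Defensive.

Local Open Scope R_scope.

Definition is_topology (X : Type) (op : (X -> Prop) -> Prop) : Prop :=
  op (fun _ => True) /\
  (forall U V, op U -> op V -> op (fun x => U x /\ V x)) /\
  (forall (I : Type) (F : I -> X -> Prop), (forall i, op (F i)) ->
      op (fun x => exists i, F i x)).

(** A non-Archimedean absolute value (real valued, i.e. of rank one, possibly trivial). *)
Definition is_nonarch_abs (K : fieldType) (abs : K -> R) : Prop :=
  (forall x, 0 <= abs x) /\
  (forall x, abs x = 0 <-> x = GRing.zero) /\
  (forall x y, abs (GRing.mul x y) = abs x * abs y) /\
  (forall x y, abs (GRing.add x y) <= Rmax (abs x) (abs y)).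

Definition abs_dist (K : fieldType) (abs : K -> R) (x y : K) : R :=
  abs (GRing.add x (GRing.opp y)).

Definition is_complete_abs (K : fieldType) (abs : K -> R) : Prop :=
  forall u : nat -> K,
    (forall eps, 0 < eps -> exists N, forall m n, (N <= m)%nat -> (N <= n)%nat ->
        abs_dist abs (u m) (u n) < eps) ->
    exists l, forall eps, 0 < eps -> exists N, forall n, (N <= n)%nat ->
        abs_dist abs (u n) l < eps.

Definition complete_nonarch_field (K : fieldType) (abs : K -> R) : Prop :=
  is_nonarch_abs abs /\ is_complete_abs abs.

(** Bounded continuous functions X -> K (open balls form a basis of K). *)
Definition is_cbd (X : Type) (op : (X -> Prop) -> Prop) (K : fieldType) (abs : K -> R)
    (f : X -> K) : Prop :=
  (forall (a : K) (r : R), 0 < r -> op (fun x => abs_dist abs (f x) a < r)) /\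
  (exists B, forall x, abs (f x) <= B).

Definition Cbd (X : Type) (op : (X -> Prop) -> Prop) (K : fieldType) (abs : K -> R) :=
  { f : X -> K | is_cbd op abs f }.

(** Bounded multiplicative seminorms on C_bd(X,K) extending |.| on K
    (boundedness w.r.t. the sup norm: s f <= ||f||_sup). *)
Definition is_bsc_point (X : Type) (op : (X -> Prop) -> Prop) (K : fieldType) (abs : K -> R)
    (s : Cbd op abs -> R) : Prop :=
  (forall f, 0 <= s f) /\
  (forall f g h : Cbd op abs,
      (forall x, proj1_sig h x = GRing.add (proj1_sig f x) (proj1_sig g x)) ->
      s h <= s f + s g) /\
  (forall f g h : Cbd op abs,
      (forall x, proj1_sig h x = GRing.mul (proj1_sig f x) (proj1_sig g x)) ->
      s h = s f * s g) /\
  (forall (c : K) (h : Cbd op abs), (forall x, proj1_sig h x = c) -> s h = abs c) /\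
  (forall (h : Cbd op abs) (B : R), (forall x, abs (proj1_sig h x) <= B) -> s h <= B).

Definition BSC (X : Type) (op : (X -> Prop) -> Prop) (K : fieldType) (abs : K -> R) :=
  { s : Cbd op abs -> R | is_bsc_point s }.

(** Weakest topology making all s |-> |f|_s continuous: generated by the
    subbasis { s | a < |f|_s < b }. *)
Definition bsc_open (X : Type) (op : (X -> Prop) -> Prop) (K : fieldType) (abs : K -> R)
    (U : BSC op abs -> Prop) : Prop :=
  forall s, U s ->
    exists l : list (Cbd op abs * R * R),
      Forall (fun p => let '(f, a, b) := p in a < proj1_sig s f < b) l /\
      (forall t, Forall (fun p => let '(f, a, b) := p in a < proj1_sig t f < b) l -> U t).

Definition bsc_continuous (X : Type) (op : (X -> Prop) -> Prop)
    (K : fieldType) (absK : K -> R) (L : fieldType) (absL : L -> R)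
    (phi : BSC op absK -> BSC op absL) : Prop :=
  forall U, bsc_open U -> bsc_open (fun s => U (phi s)).

Definition bsc_homeomorphism (X : Type) (op : (X -> Prop) -> Prop)
    (K : fieldType) (absK : K -> R) (L : fieldType) (absL : L -> R)
    (phi : BSC op absK -> BSC op absL) : Prop :=
  exists psi : BSC op absL -> BSC op absK,
    (forall s, psi (phi s) = s) /\ (forall t, phi (psi t) = t) /\
    bsc_continuous phi /\ bsc_continuous psi.

Definition is_eval_at (X : Type) (op : (X -> Prop) -> Prop) (K : fieldType) (abs : K -> R)
    (x : X) (s : BSC op abs) : Prop :=
  forall f : Cbd op abs, proj1_sig s f = abs (proj1_sig f x).

Definition eval_compatible (X : Type) (op : (X -> Prop) -> Prop)
    (K : fieldType) (absK : K -> R) (L : fieldType) (absL : L -> R)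
    (phi : BSC op absK -> BSC op absL) : Prop :=
  forall x s, is_eval_at x s -> is_eval_at x (phi s).

(* Main.v *)
Require Import Defs.
From HB Require Import structures.
From mathcomp Require Import all_boot all_algebra.
From Stdlib Require Import Reals List Lra.
From Stdlib Require Import Classical ClassicalDescription ClassicalEpsilon FunctionalExtensionality PropExtensionality ProofIrrelevance.
Import GRing.Theory.

Set Implicit Arguments. Unset Strict Implicit.

Section RF.
Local Open Scope ring_scope.
Lemma invdiff (K: fieldType) (a b : K) : a != 0 -> b != 0 -> a^-1 - b^-1 = (b - a) * (a^-1 * b^-1).
Proof. move=> ha hb. by rewrite mulrBl mulrCA mulfV // mulr1 mulrA mulfV // mul1r. Qed.
Lemma mul_diff (K: fieldType) (a b c d : K) : a*b - c*d = a*(b - d) + (a - c)*d.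
Proof. by rewrite mulrBr mulrBl addrA subrK. Qed.
End RF.

Local Open Scope R_scope.

Local Notation ap f x := (@proj1_sig _ _ f x).

Section Abs.
Variable K : fieldType.
Variable abs : K -> R.
Hypothesis H : is_nonarch_abs abs.

Lemma abs_ge0 x : 0 <= abs x. Proof. exact: (proj1 H x). Qed.
Lemma abs0 : abs GRing.zero = 0. Proof. by apply (proj1 (proj2 H)). Qed.
Lemma abs_eq0 x : abs x = 0 -> x = GRing.zero. Proof. by apply (proj1 (proj2 H)). Qed.
Lemma absM x y : abs (GRing.mul x y) = abs x * abs y. Proof. exact: (proj1 (proj2 (proj2 H))). Qed.
Lemma absD x y : abs (GRing.add x y) <= Rmax (abs x) (abs y). Proof. exact: (proj2 (proj2 (proj2 H))). Qed.
Lemma abs_neq0 x : x <> GRing.zero -> 0 < abs x.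
Proof. move=> hx. have := abs_ge0 x. have : abs x <> 0 by move=> /abs_eq0. lra. Qed.
Lemma abs1 : abs (GRing.one K) = 1.
Proof.
  have e := absM (GRing.one K) (GRing.one K). rewrite GRing.mul1r in e.
  have n : abs (GRing.one K) <> 0.
  { move=> /abs_eq0 h. by have:= @GRing.oner_neq0 K; rewrite h eqxx. }
  apply (Rmult_eq_reg_l (abs (GRing.one K))); last exact n.
  rewrite Rmult_1_r; symmetry; exact e.
Qed.
Lemma absN x : abs (GRing.opp x) = abs x.
Proof.
  have e := absM (GRing.opp (GRing.one K)) (GRing.opp (GRing.one K)).
  rewrite GRing.mulrNN GRing.mul1r abs1 in e.
  have p := abs_ge0 (GRing.opp (GRing.one K)).
  have e1 : abs (GRing.opp (GRing.one K)) = 1 by nra.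
  by rewrite -GRing.mulN1r absM e1 Rmult_1_l.
Qed.
Lemma absV x : x <> GRing.zero -> abs (GRing.inv x) = / abs x.
Proof.
  move=> hx. have hx' : x != GRing.zero by apply/eqP.
  have e := absM x (GRing.inv x). rewrite GRing.mulfV // abs1 in e.
  have := abs_neq0 hx. move=> p.
  apply (Rmult_eq_reg_l (abs x)); last lra. rewrite -e Rinv_r //; lra.
Qed.

Lemma dist_sym a b : abs_dist abs a b = abs_dist abs b a.
Proof. by rewrite /abs_dist -(absN (GRing.add b (GRing.opp a))) GRing.opprB. Qed.
Lemma dist_ultra a b c : abs_dist abs a c <= Rmax (abs_dist abs a b) (abs_dist abs b c).
Proof.
  rewrite /abs_dist.
  have -> : GRing.add a (GRing.opp c) =
    GRing.add (GRing.add a (GRing.opp b)) (GRing.add b (GRing.opp c)).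
  { by rewrite GRing.addrA GRing.subrK. }
  exact: absD.
Qed.
Lemma dist_self a : abs_dist abs a a = 0.
Proof. by rewrite /abs_dist GRing.subrr abs0. Qed.
Lemma dist_0 a : abs_dist abs a GRing.zero = abs a.
Proof. by rewrite /abs_dist GRing.oppr0 GRing.addr0. Qed.
Lemma dist_ge0 a b : 0 <= abs_dist abs a b. Proof. exact: abs_ge0. Qed.
Lemma abs_ultra a b : abs (GRing.add a b) <= Rmax (abs a) (abs b). Proof. exact: absD. Qed.
Lemma Rmax_le_sum a b : 0 <= a -> 0 <= b -> Rmax a b <= a + b.
Proof. move=> ha hb. apply Rmax_lub; lra. Qed.

Lemma ultra_eq a b : abs_dist abs a b < abs b -> abs a = abs b.
Proof.
  move=> h.
  have h1 : abs a <= Rmax (abs_dist abs a b) (abs b).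
  { have -> : a = GRing.add (GRing.add a (GRing.opp b)) b by rewrite GRing.subrK.
    rewrite GRing.subrK. have := absD (GRing.add a (GRing.opp b)) b.
    by rewrite GRing.subrK. }
  have h2 : abs b <= Rmax (abs_dist abs a b) (abs a).
  { have := absD (GRing.add b (GRing.opp a)) a. rewrite GRing.subrK.
    by rewrite -/(abs_dist abs b a) dist_sym. }
  move: h1 h2. unfold Rmax. repeat destruct Rle_dec; lra.
Qed.
End Abs.

Section Top.
Variable X : Type.
Variable op : (X -> Prop) -> Prop.
Hypothesis hop : is_topology op.

Lemma op_ext U V : op U -> (forall x, U x <-> V x) -> op V.
Proof.
  move=> hU e. have -> : V = U; last done.
  apply functional_extensionality => x; apply propositional_extensionality; split; apply e.
Qed.

Lemma open_local U :
  (forall x, U x -> exists V, op V /\ V x /\ forall y, V y -> U y) -> op U.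
Proof.
  move=> hl.
  pose I := {V : X -> Prop | op V /\ forall y, V y -> U y}.
  have hu := proj2 (proj2 hop) I (fun i => proj1_sig i) (fun i => proj1 (proj2_sig i)).
  apply: (op_ext hu) => x; split.
  - case=> [[V [_ hV]] /= Vx]. exact: hV.
  - move=> Ux. case: (hl x Ux) => V [oV [Vx sV]]. by exists (exist _ V (conj oV sV)).
Qed.

Lemma op_True : op (fun _ => True). Proof. exact: proj1 hop. Qed.
Lemma op_and U V : op U -> op V -> op (fun x => U x /\ V x).
Proof. exact: proj1 (proj2 hop) U V. Qed.
End Top.

Section Cbd.
Variable X : Type.
Variable op : (X -> Prop) -> Prop.
Hypothesis hop : is_topology op.
Variable K : fieldType.
Variable abs : K -> R.
Hypothesis hK : is_nonarch_abs abs.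

Lemma cbd_local (f : X -> K) :
  (forall x rho, 0 < rho -> exists V, op V /\ V x /\ forall y, V y -> abs_dist abs (f y) (f x) < rho) ->
  (exists B, forall x, abs (f x) <= B) -> is_cbd op abs f.
Proof.
  move=> hl hB; split; last exact hB.
  move=> a r hr.
  apply: (open_local hop) => x hx.
  have [V [oV [Vx sV]]] := hl x r hr.
  exists V; split=> //; split=> // y Vy.
  have h2 := dist_ultra hK (f y) (f x) a. have h1 := sV y Vy.
  apply: (Rle_lt_trans _ _ _ h2). apply Rmax_lub_lt; lra.
Qed.

Lemma cbd_ball (g : Cbd op abs) a r : 0 < r -> op (fun y => abs_dist abs (ap g y) a < r).
Proof. move=> hr. exact: (proj1 (proj2_sig g) a r hr). Qed.

Lemma cbd_bound (g : Cbd op abs) : exists B, 0 <= B /\ forall x, abs (ap g x) <= B.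
Proof.
  case: (proj2 (proj2_sig g)) => B hB. exists (Rmax B 0); split; first exact: Rmax_r.
  move=> x. apply: Rle_trans (hB x) _. exact: Rmax_l.
Qed.

Lemma cst_cbd (c : K) : is_cbd op abs (fun _ => c).
Proof.
  apply: cbd_local.
  - move=> x rho hr. exists (fun _ => True); split; first exact: op_True.
    split=> // y _. by rewrite (dist_self hK).
  - exists (abs c) => _; lra.
Qed.
Definition cst (c : K) : Cbd op abs := exist _ _ (cst_cbd c).

Lemma cbd_mul (f g : Cbd op abs) : is_cbd op abs (fun x => GRing.mul (ap f x) (ap g x)).
Proof.
  have [Bf [Bf0 hBf]] := cbd_bound f. have [Bg [Bg0 hBg]] := cbd_bound g.
  apply: cbd_local.
  - move=> x rho hr. pose B := Bf + Bg + 1. have hB : 0 < B by rewrite /B; lra.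
    pose d := rho / B. have hd : 0 < d by apply Rdiv_lt_0_compat.
    exists (fun y => abs_dist abs (ap f y) (ap f x) < d /\ abs_dist abs (ap g y) (ap g x) < d).
    split; first by apply: op_and => //; apply: cbd_ball.
    split; first by rewrite !(dist_self hK).
    move=> y [h1 h2].
    have e : GRing.add (GRing.mul (ap f y) (ap g y)) (GRing.opp (GRing.mul (ap f x) (ap g x))) =
      GRing.add (GRing.mul (ap f y) (GRing.add (ap g y) (GRing.opp (ap g x))))
                (GRing.mul (GRing.add (ap f y) (GRing.opp (ap f x))) (ap g x)) by apply: mul_diff.
    rewrite /abs_dist e. apply: Rle_lt_trans (absD hK _ _) _.
    rewrite !(absM hK). rewrite /abs_dist in h1 h2.
    have := hBf y. have := hBg x. have := abs_ge0 hK (ap f y). have := abs_ge0 hK (ap g x).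
    have := abs_ge0 hK (GRing.add (ap g y) (GRing.opp (ap g x))).
    have := abs_ge0 hK (GRing.add (ap f y) (GRing.opp (ap f x))).
    have eB : d * B = rho by rewrite /d /Rdiv Rmult_assoc Rinv_l ?Rmult_1_r; lra.
    move=> *. have hBf' : abs (ap f y) <= B by rewrite /B; lra.
    have hBg' : abs (ap g x) <= B by rewrite /B; lra.
    clearbody B d. apply Rmax_lub_lt.
    + apply: (Rle_lt_trans _ (B * abs (GRing.add (ap g y) (GRing.opp (ap g x))))).
      * apply Rmult_le_compat_r; lra.
      * rewrite -eB Rmult_comm. apply Rmult_lt_compat_r; lra.
    + apply: (Rle_lt_trans _ (abs (GRing.add (ap f y) (GRing.opp (ap f x))) * B)).
      * apply Rmult_le_compat_l; lra.
      * rewrite -eB. apply Rmult_lt_compat_r; lra.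
  - exists (Bf * Bg) => x. rewrite (absM hK).
    apply Rmult_le_compat; auto using abs_ge0.
Qed.
Definition cmul (f g : Cbd op abs) : Cbd op abs := exist _ _ (cbd_mul f g).

Definition indic (U : X -> Prop) (x : X) : K :=
  if excluded_middle_informative (U x) then GRing.one K else GRing.zero.

Definition Ind (h : X -> K) (U : X -> Prop) :=
  forall x, (U x -> h x = GRing.one K) /\ (~ U x -> h x = GRing.zero).

Lemma Ind_indic U : Ind (indic U) U.
Proof. move=> x; rewrite /indic; case: excluded_middle_informative => //. Qed.

Lemma abs_Ind h U x : Ind h U -> abs (h x) <= 1.
Proof.
  move=> hI. case: (classic (U x)) => hx.
  - rewrite (proj1 (hI x) hx) (abs1 hK); lra.
  - rewrite (proj2 (hI x) hx) (abs0 hK); lra.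
Qed.

Lemma indic_cbd U : op U -> op (fun x => ~ U x) -> is_cbd op abs (indic U).
Proof.
  move=> oU oC. have hI := Ind_indic U.
  apply: cbd_local.
  - move=> x rho hr. case: (classic (U x)) => hx.
    + exists U; do 2 split=> //. move=> y hy.
      by rewrite (proj1 (hI y) hy) (proj1 (hI x) hx) (dist_self hK).
    + exists (fun x => ~ U x); do 2 split=> //. move=> y hy.
      by rewrite (proj2 (hI y) hy) (proj2 (hI x) hx) (dist_self hK).
  - exists 1 => x. exact: abs_Ind.
Qed.

Lemma clopen_ind U : op U -> op (fun x => ~ U x) -> exists h : Cbd op abs, Ind (proj1_sig h) U.
Proof. move=> oU oC. by exists (exist _ _ (indic_cbd oU oC)); apply: Ind_indic. Qed.

Lemma absm1 : abs (GRing.opp (GRing.one K)) = 1.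
Proof. by rewrite (absN hK) (abs1 hK). Qed.

Lemma ind_clopen (h : Cbd op abs) U : Ind (proj1_sig h) U -> op U /\ op (fun x => ~ U x).
Proof.
  move=> hI. split.
  - apply: (op_ext (cbd_ball h (GRing.one K) Rlt_0_1)) => x; split.
    + move=> hx. apply: NNPP => nU. move: hx. rewrite (proj2 (hI x) nU).
      rewrite /abs_dist GRing.add0r absm1. lra.
    + move=> hx. rewrite (proj1 (hI x) hx) (dist_self hK). lra.
  - apply: (op_ext (cbd_ball h GRing.zero Rlt_0_1)) => x; split.
    + move=> hx nU. move: hx. rewrite (proj1 (hI x) nU) dist_0 (abs1 hK). lra.
    + move=> hx. rewrite (proj2 (hI x) hx) (dist_self hK). lra.
Qed.
End Cbd.

Section BSCK.
Variable X : Type.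
Variable op : (X -> Prop) -> Prop.
Hypothesis hop : is_topology op.
Variable K : fieldType.
Variable abs : K -> R.
Hypothesis hK : is_nonarch_abs abs.

Implicit Types (s : BSC op abs) (f g h : Cbd op abs).

Lemma bsc_ge0 s f : 0 <= ap s f. Proof. exact: (proj1 (proj2_sig s) f). Qed.
Lemma bsc_add s f g h : (forall x, ap h x = GRing.add (ap f x) (ap g x)) -> ap s h <= ap s f + ap s g.
Proof. exact: (proj1 (proj2 (proj2_sig s)) f g h). Qed.
Lemma bsc_mul s f g h : (forall x, ap h x = GRing.mul (ap f x) (ap g x)) -> ap s h = ap s f * ap s g.
Proof. exact: (proj1 (proj2 (proj2 (proj2_sig s))) f g h). Qed.
Lemma bsc_cst s c h : (forall x, ap h x = c) -> ap s h = abs c.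
Proof. exact: (proj1 (proj2 (proj2 (proj2 (proj2_sig s)))) c h). Qed.
Lemma bsc_bnd s h B : (forall x, abs (ap h x) <= B) -> ap s h <= B.
Proof. exact: (proj2 (proj2 (proj2 (proj2 (proj2_sig s)))) h B). Qed.

Lemma s_ext s h h' : (forall x, ap h x = ap h' x) -> ap s h = ap s h'.
Proof.
  move=> e. rewrite (@bsc_mul s h' (cst hop hK (GRing.one K)) h).
  - rewrite (@bsc_cst s (GRing.one K) (cst hop hK (GRing.one K))) // (abs1 hK); lra.
  - move=> x /=. by rewrite GRing.mulr1.
Qed.

Lemma Ind_01 s h U : Ind (proj1_sig h) U -> ap s h = 0 \/ ap s h = 1.
Proof.
  move=> hI. have e : ap s h = ap s h * ap s h.
  { apply: bsc_mul => x. case: (classic (U x)) => hx.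
    - by rewrite (proj1 (hI x) hx) GRing.mulr1.
    - by rewrite (proj2 (hI x) hx) GRing.mulr0. }
  have : ap s h * (ap s h - 1) = 0 by lra.
  case/Rmult_integral => ?; lra.
Qed.

Definition In s (U : X -> Prop) := exists h, Ind (proj1_sig h) U /\ ap s h = 1.

Lemma Ind_eq h h' U : Ind (proj1_sig h) U -> Ind (proj1_sig h') U -> forall x, ap h x = ap h' x.
Proof.
  move=> h1 h2 x. case: (classic (U x)) => hx.
  - by rewrite (proj1 (h1 x) hx) (proj1 (h2 x) hx).
  - by rewrite (proj2 (h1 x) hx) (proj2 (h2 x) hx).
Qed.

Lemma In_ind s U h : In s U -> Ind (proj1_sig h) U -> ap s h = 1.
Proof. move=> [h' [hI' e]] hI. rewrite -e. apply: s_ext. exact: Ind_eq. Qed.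

Lemma Ind_ext (h : X -> K) U V : Ind h U -> (forall x, U x <-> V x) -> Ind h V.
Proof.
  move=> hI e x; split=> hx.
  - by apply: (proj1 (hI x)); apply/e.
  - by apply: (proj2 (hI x)) => /e.
Qed.

Lemma In_ext s U V : In s U -> (forall x, U x <-> V x) -> In s V.
Proof. move=> [h [hI e]] eU. exists h; split=> //. exact: Ind_ext eU. Qed.

Lemma In_True s : In s (fun _ => True).
Proof.
  exists (cst hop hK (GRing.one K)); split.
  - by move=> x; split.
  - rewrite (@bsc_cst s (GRing.one K)) // (abs1 hK) //.
Qed.

Lemma In_ne s U : In s U -> exists x, U x.
Proof.
  move=> [h [hI e]]. apply: NNPP => hn.
  have : ap s h = 0.
  { rewrite (@bsc_cst s GRing.zero) ?(abs0 hK) // => x.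
    apply: (proj2 (hI x)) => hx. apply: hn. by exists x. }
  lra.
Qed.

Lemma In_clopen s U : In s U -> op U /\ op (fun x => ~ U x).
Proof. move=> [h [hI _]]. exact: ind_clopen hI. Qed.

Lemma clopen_inter U V : op U -> op (fun x => ~ U x) -> op V -> op (fun x => ~ V x) ->
  op (fun x => U x /\ V x) /\ op (fun x => ~ (U x /\ V x)).
Proof.
  move=> oU cU oV cV. split; first exact: op_and.
  apply: (open_local hop) => x hx. case: (classic (U x)) => hu.
  - exists (fun x => ~ V x); split=> //; split; first by move=> hv; apply: hx.
    by move=> y hy [].
  - exists (fun x => ~ U x); split=> //; split=> //. by move=> y hy [].
Qed.

Lemma In_inter s U V : In s U -> In s V -> In s (fun x => U x /\ V x).
Proof.
  move=> hU hV. have [oU cU] := In_clopen hU. have [oV cV] := In_clopen hV.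
  have [oW cW] := clopen_inter oU cU oV cV.
  have [hW hIW] := clopen_ind hop hK oW cW.
  case: hU => [hu [hIu eu]]. case: hV => [hv [hIv ev]].
  exists hW; split=> //.
  rewrite (@bsc_mul s hu hv hW) ?eu ?ev; first lra.
  move=> x. case: (classic (U x)) => ux; case: (classic (V x)) => vx.
  - by rewrite (proj1 (hIW x)) // (proj1 (hIu x)) // (proj1 (hIv x)) // GRing.mulr1.
  - by rewrite (proj2 (hIW x)) ?(proj2 (hIv x)) ?GRing.mulr0 //; case.
  - by rewrite (proj2 (hIW x)) ?(proj2 (hIu x)) ?GRing.mul0r //; case.
  - by rewrite (proj2 (hIW x)) ?(proj2 (hIu x)) ?GRing.mul0r //; case.
Qed.

Lemma In_sub s U V : In s U -> (forall x, U x -> V x) -> op V -> op (fun x => ~ V x) -> In s V.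
Proof.
  move=> [hu [hIu eu]] sub oV cV. have [hv hIv] := clopen_ind hop hK oV cV.
  exists hv; split=> //.
  have e : ap s hu = ap s hu * ap s hv.
  { apply: bsc_mul => x. case: (classic (U x)) => ux.
    - by rewrite (proj1 (hIu x) ux) (proj1 (hIv x) (sub x ux)) GRing.mulr1.
    - by rewrite (proj2 (hIu x) ux) GRing.mul0r. }
  rewrite eu in e. lra.
Qed.

Lemma In_dich s U : op U -> op (fun x => ~ U x) -> In s U \/ In s (fun x => ~ U x).
Proof.
  move=> oU cU. have [hu hIu] := clopen_ind hop hK oU cU.
  have cC : op (fun x => ~ ~ U x) by apply: (op_ext oU) => x; split=> [h|/NNPP].
  have [hc hIc] := clopen_ind hop hK cU cC.
  have e : 1 <= ap s hu + ap s hc.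
  { rewrite -(abs1 hK) -(@bsc_cst s (GRing.one K) (cst hop hK (GRing.one K))) //.
    apply: bsc_add => x /=. case: (classic (U x)) => ux.
    - by rewrite (proj1 (hIu x) ux) (proj2 (hIc x)) ?GRing.addr0.
    - by rewrite (proj2 (hIu x) ux) (proj1 (hIc x)) ?GRing.add0r. }
  case: (Ind_01 s hIu) => eu.
  - right. exists hc; split=> //. case: (Ind_01 s hIc); lra.
  - left. by exists hu.
Qed.

Lemma In_disj s U V : In s U -> In s V -> (forall x, U x -> V x -> False) -> False.
Proof. move=> hU hV hd. have [x [ux vx]] := In_ne (In_inter hU hV). exact: hd ux vx. Qed.

End BSCK.

Section Char.
Variable X : Type.
Variable op : (X -> Prop) -> Prop.
Hypothesis hop : is_topology op.
Variable K : fieldType.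
Variable abs : K -> R.
Hypothesis hK : is_nonarch_abs abs.

Definition LC (h : X -> R) := forall r, 0 < r -> op (fun x => h x < r) /\ op (fun x => r <= h x).

Lemma LC_lt h r : LC h -> 0 < r -> op (fun x => h x < r) /\ op (fun x => ~ h x < r).
Proof.
  move=> hl hr. have [o1 o2] := hl r hr. split=> //.
  apply: (op_ext o2) => x; split; [apply: Rle_not_lt | apply: Rnot_lt_le].
Qed.
Lemma LC_le h r : LC h -> 0 < r -> op (fun x => r <= h x) /\ op (fun x => ~ r <= h x).
Proof.
  move=> hl hr. have [o1 o2] := hl r hr. split=> //.
  apply: (op_ext o1) => x; split; [apply: Rlt_not_le | apply: Rnot_le_lt].
Qed.

Lemma LC_abs (L : fieldType) (absL : L -> R) (hL : is_nonarch_abs absL) (g : Cbd op absL) :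
  LC (fun x => absL (ap g x)).
Proof.
  move=> r hr. split.
  - apply: (op_ext (cbd_ball g GRing.zero hr)) => x. by rewrite dist_0.
  - apply: (open_local hop) => x hx.
    exists (fun y => abs_dist absL (ap g y) (ap g x) < r); split; first exact: cbd_ball.
    split; first by rewrite (dist_self hL).
    move=> y hy.
    have hy' : abs_dist absL (ap g y) (ap g x) < absL (ap g x) by lra.
    rewrite (ultra_eq hL hy'). lra.
Qed.

Definition Char (s : BSC op abs) (h : X -> R) (v : R) :=
  0 <= v /\ forall r, 0 < r ->
    (v < r -> In s (fun x => h x < r)) /\ (r < v -> In s (fun x => r <= h x)).

Lemma Char_le s h v r : (forall x, 0 <= h x) -> Char s h v -> In s (fun x => h x < r) -> v <= r.
Proof.
  move=> h0 [v0 hc] hi. have [x hx] := In_ne hK hi. have := h0 x => hx0.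
  apply: Rnot_lt_le => hlt. have [_ h2] := hc r ltac:(lra).
  apply: (In_disj hop hK hi (h2 hlt)) => y; lra.
Qed.

Lemma Char_ge s h v r : Char s h v -> 0 < r -> In s (fun x => r <= h x) -> r <= v.
Proof.
  move=> [v0 hc] hr hi. apply: Rnot_lt_le => hlt. have [h1 _] := hc r hr.
  apply: (In_disj hop hK hi (h1 hlt)) => y; lra.
Qed.

Lemma Char_unique s h v w : Char s h v -> Char s h w -> v = w.
Proof.
  move=> hv hw.
  have key : forall v w, Char s h v -> Char s h w -> v < w -> False.
  { move=> a b [a0 ha] [b0 hb] lt. pose r := (a + b) / 2.
    have hr : 0 < r by rewrite /r; lra.
    have i1 := proj1 (ha r hr) ltac:(rewrite /r; lra).
    have i2 := proj2 (hb r hr) ltac:(rewrite /r; lra).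
    apply: (In_disj hop hK i1 i2) => y; lra. }
  case: (Rtotal_order v w) => [lt|[//|lt]].
  - by case: (key _ _ hv hw lt).
  - by case: (key _ _ hw hv lt).
Qed.

Lemma Char_ext s h h' v : Char s h v -> (forall x, h x = h' x) -> Char s h' v.
Proof.
  move=> [v0 hc] e. split=> // r hr. have [h1 h2] := hc r hr. split.
  - move=> lt. apply: (In_ext (h1 lt)) => x. by rewrite e.
  - move=> lt. apply: (In_ext (h2 lt)) => x. by rewrite e.
Qed.

Lemma Char_exists s h : LC h -> (forall x, 0 <= h x) -> (exists B, forall x, h x <= B) ->
  exists v, Char s h v.
Proof.
  move=> hl h0 [B hB].
  pose E := fun r => r = 0 \/ (0 < r /\ In s (fun x => r <= h x)).
  have bE : bound E.
  { exists (Rmax B 0) => r [->|[hr hi]]; first exact: Rmax_r.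
    have [x hx] := In_ne hK hi. apply: Rle_trans hx _. apply: Rle_trans (hB x) _.
    exact: Rmax_l. }
  have [v [ub lub]] := completeness E bE (ex_intro _ 0 (or_introl erefl)).
  exists v. have v0 : 0 <= v by apply: ub; left.
  split=> // r hr. split.
  - move=> lt. have [o1 o2] := LC_lt hl hr.
    case: (In_dich hop hK s o1 o2) => // hi.
    have : r <= v.
    { apply: ub. right; split=> //. apply: (In_ext hi) => x.
      split; [apply: Rnot_lt_le | apply: Rle_not_lt]. }
    lra.
  - move=> lt. have : ~ is_upper_bound E r by move=> hu; have := lub r hu; lra.
    move=> nu. apply: NNPP => ni. apply: nu => e [->|[he hi]]; first lra.
    apply: Rnot_lt_le => lre. apply: ni. have [o1 o2] := LC_le hl hr.
    apply: (In_sub hop hK hi _ o1 o2) => x; lra.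
Qed.

Lemma inv_cbd (g : Cbd op abs) r : 0 < r ->
  is_cbd op abs (fun x => if excluded_middle_informative (r <= abs (ap g x))
                          then GRing.inv (ap g x) else GRing.zero).
Proof.
  move=> hr. apply: (cbd_local hop hK).
  - move=> x rho hrho.
    case: excluded_middle_informative => hx.
    + have gx0 : ap g x <> GRing.zero by move=> e0; rewrite e0 (abs0 hK) in hx; lra.
      pose a := abs (ap g x). have ha : 0 < a by rewrite /a; lra.
      pose d := Rmin r (rho * (a * a)).
      have hd : 0 < d by apply: Rmin_pos => //; apply: Rmult_lt_0_compat; nra.
      exists (fun y => abs_dist abs (ap g y) (ap g x) < d); split; first exact: cbd_ball.
      split; first by rewrite (dist_self hK).
      move=> y hy.
      have hyr : abs_dist abs (ap g y) (ap g x) < abs (ap g x).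
      { have := Rmin_l r (rho * (a*a)). rewrite -/d /a in hy *. lra. }
      have ey := ultra_eq hK hyr.
      case: excluded_middle_informative => hy'; last by exfalso; apply: hy'; rewrite ey.
      have gy0 : ap g y <> GRing.zero by move=> e; rewrite e (abs0 hK) in hy'; lra.
      rewrite /abs_dist invdiff; try by apply/eqP.
      rewrite !(absM hK) !(absV hK) // ey -/a.
      rewrite -/(abs_dist abs (ap g x) (ap g y)) (dist_sym hK).
      have := Rmin_r r (rho * (a*a)). rewrite -/d => hd2.
      have hia : 0 < / a * / a by apply: Rmult_lt_0_compat; apply: Rinv_0_lt_compat.
      have : rho * (a * a) * (/ a * / a) = rho by field; lra.
      move=> e. rewrite -e. apply: Rmult_lt_compat_r => //. lra.
    + exists (fun y => abs (ap g y) < r); split.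
      * apply: (op_ext (cbd_ball g GRing.zero hr)) => y. by rewrite dist_0.
      * split; first lra. move=> y hy.
        case: excluded_middle_informative => hy'; first lra.
        rewrite (dist_self hK); lra.
  - exists (/ r) => x. case: excluded_middle_informative => hx.
    + have gx0 : ap g x <> GRing.zero by move=> e0; rewrite e0 (abs0 hK) in hx; lra.
      rewrite (absV hK) //. apply: Rinv_le_contravar => //.
    + rewrite (abs0 hK). left. exact: Rinv_0_lt_compat.
Qed.

Lemma Char_s s (g : Cbd op abs) : Char s (fun x => abs (ap g x)) (ap s g).
Proof.
  have hl := LC_abs hK g.
  split; first exact: bsc_ge0. move=> r hr. split.
  - move=> lt. have [o1 o2] := LC_lt hl hr.
    case: (In_dich hop hK s o1 o2) => // hi. exfalso.
    case: hi => hw [hIw ew].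
    pose k : Cbd op abs := exist _ _ (inv_cbd g hr).
    have e : ap s hw = ap s g * ap s k.
    { apply: bsc_mul => x /=. case: excluded_middle_informative => hx.
      - have gx0 : ap g x <> GRing.zero by move=> e0; rewrite e0 (abs0 hK) in hx; lra.
        rewrite (proj1 (hIw x)); last by apply: Rle_not_lt.
        by rewrite GRing.mulfV //; apply/eqP.
      - rewrite (proj2 (hIw x)); last by move=> /Rnot_lt_le.
        by rewrite GRing.mulr0. }
    have hk : ap s k <= / r.
    { apply: bsc_bnd => x /=. case: excluded_middle_informative => hx.
      - have gx0 : ap g x <> GRing.zero by move=> e0; rewrite e0 (abs0 hK) in hx; lra.
        rewrite (absV hK) //. apply: Rinv_le_contravar => //.
      - rewrite (abs0 hK). left. exact: Rinv_0_lt_compat. }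
    have g0 := bsc_ge0 s g. have k0 := bsc_ge0 s k.
    have ir : r * / r = 1 by field; lra.
    have ir0 : 0 < / r by apply: Rinv_0_lt_compat.
    rewrite ew in e. nra.
  - move=> lt. have [o1 o2] := LC_lt hl hr.
    case: (In_dich hop hK s o1 o2) => hi; last first.
    { apply: (In_ext hi) => x. split; [apply: Rnot_lt_le | apply: Rle_not_lt]. }
    exfalso. case: hi => hu [hIu eu].
    pose p := cmul hop hK g hu.
    have e : ap s p = ap s g * ap s hu by apply: bsc_mul.
    have : ap s p <= r.
    { apply: bsc_bnd => x /=. case: (classic (abs (ap g x) < r)) => hx.
      - rewrite (proj1 (hIu x) hx) GRing.mulr1. lra.
      - rewrite (proj2 (hIu x) hx) GRing.mulr0 (abs0 hK). lra. }
    rewrite e eu. lra.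
Qed.

End Char.

Lemma bsc_eq X (op : (X -> Prop) -> Prop) (K : fieldType) (abs : K -> R) (s t : BSC op abs) :
  (forall f, ap s f = ap t f) -> s = t.
Proof.
  move: s t => [s ps] [t pt] /= e.
  have ee : s = t := functional_extensionality _ _ e. subst t.
  f_equal; apply: proof_irrelevance.
Qed.

Definition sat X (op : (X -> Prop) -> Prop) (K : fieldType) (abs : K -> R) (s : BSC op abs)
  (p : Cbd op abs * R * R) := let '(f, a, b) := p in a < ap s f < b.

Section Phi.
Variable X : Type.
Variable op : (X -> Prop) -> Prop.
Hypothesis hop : is_topology op.
Variable K : fieldType.
Variable absK : K -> R.
Hypothesis hK : is_nonarch_abs absK.
Variable L : fieldType.
Variable absL : L -> R.
Hypothesis hL : is_nonarch_abs absL.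

Lemma pval_ex (s : BSC op absK) (g : Cbd op absL) : exists v, Char s (fun x => absL (ap g x)) v.
Proof.
  apply: (Char_exists hop hK s (LC_abs hop hL g)).
  - move=> x; exact: abs_ge0.
  - have [B [_ hB]] := cbd_bound g. by exists B.
Qed.

Definition pval (s : BSC op absK) (g : Cbd op absL) : R :=
  proj1_sig (constructive_indefinite_description _ (pval_ex s g)).

Lemma pval_char s g : Char s (fun x => absL (ap g x)) (pval s g).
Proof. exact: (proj2_sig (constructive_indefinite_description _ (pval_ex s g))). Qed.

Lemma pval_ge0 s g : 0 <= pval s g. Proof. exact: (proj1 (pval_char s g)). Qed.

Lemma absL_ge0 (g : Cbd op absL) x : 0 <= absL (ap g x). Proof. exact: abs_ge0. Qed.

Lemma In_lt s (g : Cbd op absL) r : 0 < r -> pval s g < r -> In s (fun x => absL (ap g x) < r).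
Proof. move=> hr lt. exact: (proj1 (proj2 (pval_char s g) r hr) lt). Qed.
Lemma In_le s (g : Cbd op absL) r : 0 < r -> r < pval s g -> In s (fun x => r <= absL (ap g x)).
Proof. move=> hr lt. exact: (proj2 (proj2 (pval_char s g) r hr) lt). Qed.

Lemma phi_point (s : BSC op absK) : @is_bsc_point X op L absL (pval s).
Proof.
  split; first exact: pval_ge0.
  split.
  { move=> f g h e.
    have tf := pval_ge0 s f. have tg := pval_ge0 s g.
    apply: Rle_trans (Rmax_le_sum tf tg).
    apply: Rnot_lt_le => lt.
    have mf := Rmax_l (pval s f) (pval s g). have mg := Rmax_r (pval s f) (pval s g).
    move: lt mf mg. move: (Rmax (pval s f) (pval s g)) => m lt mf mg.
    have hr : 0 < (m + pval s h) / 2 by lra.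
    have i1 := In_le (s:=s) (g:=h) hr ltac:(lra).
    have i2 := In_lt (s:=s) (g:=f) hr ltac:(lra).
    have i3 := In_lt (s:=s) (g:=g) hr ltac:(lra).
    move: i1 i2 i3 hr. move: ((m + pval s h) / 2) => r i1 i2 i3 hr.
    apply: (In_disj hop hK (In_inter hop hK i2 i3) i1) => x [h2 h3] h1.
    have := absD hL (ap f x) (ap g x). rewrite -e.
    have : Rmax (absL (ap f x)) (absL (ap g x)) < r by apply: Rmax_lub_lt.
    lra. }
  split.
  { move=> f g h e. set tf := pval s f. set tg := pval s g.
    have etf : pval s f = tf := erefl. have etg : pval s g = tg := erefl.
    have tf0 : 0 <= tf := pval_ge0 s f. have tg0 : 0 <= tg := pval_ge0 s g.
    have eh : forall x, absL (ap h x) = absL (ap f x) * absL (ap g x) by move=> x; rewrite e (absM hL).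
    apply: (Char_unique hop hK (pval_char s h)).
    split; first by apply: Rmult_le_pos.
    move=> r hr. have hlh := LC_abs hop hL h. split.
    - move=> lt. pose d := Rmin 1 ((r - tf * tg) / (tf + tg + 1)).
      have d1 : d <= 1 by apply: Rmin_l.
      have d2 : d * (tf + tg + 1) <= r - tf * tg.
      { have := Rmin_r 1 ((r - tf * tg) / (tf + tg + 1)). rewrite -/d => hd.
        have : (r - tf * tg) / (tf + tg + 1) * (tf + tg + 1) = r - tf * tg by field; lra.
        move=> ee. rewrite -ee. apply: Rmult_le_compat_r => //; lra. }
      have d0 : 0 < d.
      { apply: Rmin_pos; first lra. apply: Rdiv_lt_0_compat; lra. }
      have i1 := In_lt (s:=s) (g:=f) (r:=tf + d) ltac:(lra) ltac:(lra).
      have i2 := In_lt (s:=s) (g:=g) (r:=tg + d) ltac:(lra) ltac:(lra).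
      have [o1 o2] := LC_lt hlh hr.
      apply: (In_sub hop hK (In_inter hop hK i1 i2) _ o1 o2) => x [h1 h2].
      rewrite eh. have := absL_ge0 f x. have := absL_ge0 g x. move=> *. nra.
    - move=> lt.
      have tfp : 0 < tf by nra. have tgp : 0 < tg by nra.
      pose q := r / tg. have eq : q * tg = r by rewrite /q; field; lra.
      have qf : q < tf by nra. have q0 : 0 < q by nra.
      pose a := (q + tf) / 2. have a0 : 0 < a by rewrite /a; lra.
      pose b := r / a. have eb : b * a = r by rewrite /b; field; lra.
      have b0 : 0 < b by nra. have bg : b < tg by rewrite /a in a0 eb; nra.
      have i1 := In_le (s:=s) (g:=f) (r:=a) a0 ltac:(rewrite /a; lra).
      have i2 := In_le (s:=s) (g:=g) (r:=b) b0 bg.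
      have [o1 o2] := LC_le hlh hr.
      apply: (In_sub hop hK (In_inter hop hK i1 i2) _ o1 o2) => x [h1 h2].
      rewrite eh. nra. }
  split.
  { move=> c h e. apply: (Char_unique hop hK (pval_char s h)).
    split; first exact: abs_ge0.
    move=> r hr; split=> lt; apply: (In_ext (In_True hop hK s)) => x; rewrite e; split=> //; lra. }
  { move=> h B hB. apply: Rnot_lt_le => lt.
    have [x0 _] := In_ne hK (In_True hop hK s).
    have := absL_ge0 h x0. have := hB x0. move=> *.
    pose r := (B + pval s h) / 2. have hr : 0 < r by rewrite /r; lra.
    have hrl : r < pval s h by rewrite /r; lra.
    have [x hx] := In_ne hK (In_le (s:=s) (g:=h) hr hrl).
    have := hB x. rewrite /r in hx. lra. }
Qed.

Definition phi (s : BSC op absK) : BSC op absL := exist _ (pval s) (phi_point s).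

Lemma Char_ind1 (s : BSC op absK) (h : Cbd op absL) W : Ind (proj1_sig h) W -> In s W ->
  Char s (fun x => absL (ap h x)) 1.
Proof.
  move=> hI hW. split; first lra. move=> r hr. have hl := LC_abs hop hL h. split.
  - move=> lt. apply: (In_ext (In_True hop hK s)) => x; split=> // _.
    have := abs_Ind hL x hI. lra.
  - move=> lt. have [o1 o2] := LC_le hl hr. apply: (In_sub hop hK hW _ o1 o2) => x hx.
    rewrite (proj1 (hI x) hx) (abs1 hL). lra.
Qed.

Lemma Char_ind0 (s : BSC op absK) (h : Cbd op absL) W : Ind (proj1_sig h) W -> In s (fun x => ~ W x) ->
  Char s (fun x => absL (ap h x)) 0.
Proof.
  move=> hI hW. split; first lra. move=> r hr. have hl := LC_abs hop hL h. split.
  - move=> lt. have [o1 o2] := LC_lt hl hr. apply: (In_sub hop hK hW _ o1 o2) => x hx.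
    rewrite (proj2 (hI x) hx) (abs0 hL). lra.
  - move=> lt. lra.
Qed.

Lemma In_phi (s : BSC op absK) W : op W -> op (fun x => ~ W x) -> (In (phi s) W <-> In s W).
Proof.
  move=> oW cW. split.
  - move=> [h [hI e]]. rewrite /= in e.
    case: (In_dich hop hK s oW cW) => // hC. exfalso.
    have := Char_unique hop hK (pval_char s h) (Char_ind0 hI hC). lra.
  - move=> hW. have [h hI] := clopen_ind hop hL oW cW. exists h; split=> //=.
    exact: (Char_unique hop hK (pval_char s h) (Char_ind1 hI hW)).
Qed.

Lemma Char_phi (s : BSC op absK) h v : LC op h -> (Char (phi s) h v <-> Char s h v).
Proof.
  move=> hl. split.
  - move=> [v0 hc]; split=> // r hr. have [h1 h2] := hc r hr.
    have [o1 o2] := LC_lt hl hr. have [o3 o4] := LC_le hl hr.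
    split=> lt; [apply/(In_phi s o1 o2) | apply/(In_phi s o3 o4)]; auto.
  - move=> [v0 hc]; split=> // r hr. have [h1 h2] := hc r hr.
    have [o1 o2] := LC_lt hl hr. have [o3 o4] := LC_le hl hr.
    split=> lt; [apply/(In_phi s o1 o2) | apply/(In_phi s o3 o4)]; auto.
Qed.


Lemma In_eval x (s : BSC op absK) U : is_eval_at x s -> In s U -> U x.
Proof.
  move=> ev [h [hI e]]. apply: NNPP => nx. rewrite ev (proj2 (hI x) nx) (abs0 hK) in e. lra.
Qed.

Lemma eval_In x (s : BSC op absK) U : is_eval_at x s -> op U -> op (fun x => ~ U x) -> U x -> In s U.
Proof.
  move=> ev oU cU ux. have [h hI] := clopen_ind hop hK oU cU. exists h; split=> //.
  by rewrite ev (proj1 (hI x) ux) (abs1 hK).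
Qed.

Lemma phi_eval : eval_compatible phi.
Proof.
  move=> x s ev g /=. apply: (Char_unique hop hK (pval_char s g)).
  split; first exact: abs_ge0. have hl := LC_abs hop hL g.
  move=> r hr. have [o1 o2] := LC_lt hl hr. have [o3 o4] := LC_le hl hr.
  split=> lt; apply: (eval_In ev) => //; lra.
Qed.

Lemma entry (s : BSC op absK) (g : Cbd op absL) a b : a < pval s g < b ->
  exists l', Forall (sat s) l' /\ forall s', Forall (sat s') l' -> a < pval s' g < b.
Proof.
  move=> [ha hb]. have t0 := pval_ge0 s g.
  have hr2 : 0 < (pval s g + b)/2 by lra.
  have hlt2 : pval s g < (pval s g + b)/2 by lra.
  have [hu [hIu eu]] := In_lt (s:=s) (g:=g) hr2 hlt2.
  have key : forall s', sat s' (hu, 1/2, 2) -> pval s' g <= (pval s g + b)/2.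
  { move=> s' [h1 h2]. have e1 : ap s' hu = 1 by case: (Ind_01 s' hIu); lra.
    apply: (Char_le hop hK _ (pval_char s' g)); first by move=> x; exact: abs_ge0.
    by exists hu. }
  case: (Rlt_le_dec a 0) => ha0.
  - exists [:: (hu, 1/2, 2)]. split.
    + constructor; last by constructor. rewrite /sat eu; lra.
    + move=> s' hs. have := key s' (Forall_inv hs). have := pval_ge0 s' g. lra.
  - have hr1 : 0 < (a + pval s g)/2 by lra.
    have hlt1 : (a + pval s g)/2 < pval s g by lra.
    have [hv [hIv ev]] := In_le (s:=s) (g:=g) hr1 hlt1.
    exists [:: (hu, 1/2, 2); (hv, 1/2, 2)]. split.
    + constructor; first by rewrite /sat eu; lra.
      constructor; last by constructor. rewrite /sat ev; lra.
    + move=> s' hs. have := key s' (Forall_inv hs).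
      have := Forall_inv (Forall_inv_tail hs). rewrite /sat => [[h1 h2]].
      have e1 : ap s' hv = 1 by case: (Ind_01 s' hIv); lra.
      have := Char_ge hop hK (pval_char s' g) hr1 (ex_intro _ hv (conj hIv e1)).
      lra.
Qed.

Lemma phi_list (s : BSC op absK) l : Forall (sat (phi s)) l ->
  exists l', Forall (sat s) l' /\ forall s', Forall (sat s') l' -> Forall (sat (phi s')) l.
Proof.
  elim: l => [|[[g a] b] l IH] hl.
  - by exists nil; split.
  - have h1 := Forall_inv hl. have h2 := Forall_inv_tail hl.
    have [l1 [f1 k1]] := entry h1. have [l2 [f2 k2]] := IH h2.
    exists (l1 ++ l2). split; first by apply/Forall_app.
    move=> s' /Forall_app [hs1 hs2]. constructor; [exact: k1 | exact: k2].
Qed.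

Lemma phi_cont : bsc_continuous phi.
Proof.
  move=> U hU s hs. have [l [hl1 hl2]] := hU (phi s) hs.
  have [l' [f' k']] := phi_list hl1. exists l'. split=> // t ht. apply: hl2. exact: k' ht.
Qed.

End Phi.

Lemma phi_back X (op : (X -> Prop) -> Prop) (hop : is_topology op)
  (K : fieldType) (absK : K -> R) (hK : is_nonarch_abs absK)
  (L : fieldType) (absL : L -> R) (hL : is_nonarch_abs absL) (s : BSC op absK) :
  phi hop hL hK (phi hop hK hL s) = s.
Proof.
  apply: bsc_eq => f /=.
  have c1 := pval_char hop hL hK (phi hop hK hL s) f.
  have c2 := proj1 (Char_phi hop hK hL s _ (LC_abs hop hK f)) c1.
  exact: (Char_unique hop hK c2 (Char_s hop hK s f)).
Qed.

Lemma phi_homeo X (op : (X -> Prop) -> Prop) (hop : is_topology op)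
  (K : fieldType) (absK : K -> R) (hK : is_nonarch_abs absK)
  (L : fieldType) (absL : L -> R) (hL : is_nonarch_abs absL) :
  bsc_homeomorphism (phi hop hK hL).
Proof.
  exists (phi hop hL hK). split; first exact: phi_back.
  split; first exact: phi_back.
  split; exact: phi_cont.
Qed.

Section Dense.
Variable X : Type.
Variable op : (X -> Prop) -> Prop.
Hypothesis hop : is_topology op.
Variable K : fieldType.
Variable abs : K -> R.
Hypothesis hK : is_nonarch_abs abs.

Lemma evp_point x : @is_bsc_point X op K abs (fun f => abs (ap f x)).
Proof.
  split; first by move=> f; exact: abs_ge0.
  split.
  { move=> f g h e. rewrite e. apply: Rle_trans (absD hK _ _) _.
    apply: Rmax_le_sum; exact: abs_ge0. }
  split; first by move=> f g h e; rewrite e (absM hK).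
  split; first by move=> c h e; rewrite e.
  by move=> h B hB.
Qed.

Definition evp x : BSC op abs := exist _ _ (evp_point x).

Lemma evp_eval x : is_eval_at x (evp x).
Proof. by []. Qed.

Lemma dense_W (s : BSC op abs) l : Forall (sat s) l ->
  exists W, In s W /\ forall x, W x -> Forall (sat (evp x)) l.
Proof.
  elim: l => [|[[f a] b] l IH] hl.
  - exists (fun _ => True); split; first exact: In_True. by move=> x _; constructor.
  - have [ha hb] := Forall_inv hl. have [W [hW kW]] := IH (Forall_inv_tail hl).
    have c := Char_s hop hK s f. have t0 := bsc_ge0 s f.
    have hr2 : 0 < (ap s f + b)/2 by lra.
    have i2 := proj1 (proj2 c _ hr2) ltac:(lra).
    case: (Rlt_le_dec a 0) => ha0.
    + exists (fun x => W x /\ abs (ap f x) < (ap s f + b)/2). split; first exact: In_inter.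
      move=> x [wx hx]. constructor; last exact: kW. rewrite /sat /=. split; last lra.
      have := abs_ge0 hK (ap f x). lra.
    + have hr1 : 0 < (a + ap s f)/2 by lra.
      have i1 := proj2 (proj2 c _ hr1) ltac:(lra).
      exists (fun x => (W x /\ abs (ap f x) < (ap s f + b)/2) /\ (a + ap s f)/2 <= abs (ap f x)).
      split; first by apply: In_inter => //; apply: In_inter.
      move=> x [[wx hx] hx']. constructor; last exact: kW. rewrite /sat /=. lra.
Qed.

Lemma dense (s : BSC op abs) l : Forall (sat s) l -> exists x, Forall (sat (evp x)) l.
Proof.
  move=> hl. have [W [hW kW]] := dense_W hl. have [x wx] := In_ne hK hW. exists x. exact: kW.
Qed.

End Dense.

Lemma open_strip X (op : (X -> Prop) -> Prop) (L : fieldType) (absL : L -> R) (g : Cbd op absL) a b :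
  bsc_open (fun t : BSC op absL => a < ap t g < b).
Proof.
  move=> t ht. exists [:: (g, a, b)]. split; first by constructor.
  move=> t' h'. exact: (Forall_inv h').
Qed.

Lemma phi_unique X (op : (X -> Prop) -> Prop) (hop : is_topology op)
  (K : fieldType) (absK : K -> R) (hK : is_nonarch_abs absK)
  (L : fieldType) (absL : L -> R) (hL : is_nonarch_abs absL)
  (phi' : BSC op absK -> BSC op absL) :
  bsc_continuous phi' -> eval_compatible phi' -> forall s, phi' s = phi hop hK hL s.
Proof.
  move=> c' ev' s. apply: bsc_eq => g. apply: NNPP => ne.
  move: ne. set u := ap (phi' s) g. set v := ap (phi hop hK hL s) g. move=> ne.
  have huv : u - v <> 0 by lra.
  pose eps := Rabs (u - v) / 2.
  have he : 0 < eps by rewrite /eps; have := Rabs_pos_lt _ huv; lra.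
  have hs1 : u - eps < u < u + eps by lra.
  have hs2 : v - eps < v < v + eps by lra.
  have [l1 [f1 k1]] := c' _ (open_strip (g:=g) (a:=u - eps) (b:=u + eps)) s hs1.
  have [l2 [f2 k2]] := @phi_cont X op hop K absK hK L absL hL _ (open_strip (g:=g) (a:=v - eps) (b:=v + eps)) s hs2.
  have [x hx] := dense hop hK (l := l1 ++ l2) ltac:(apply/Forall_app; split; eauto).
  have /Forall_app [hx1 hx2] := hx.
  have w1 := k1 _ hx1. have w2 := k2 _ hx2.
  rewrite (ev' x _ (evp_eval hK x)) in w1.
  rewrite (phi_eval hop hK hL (evp_eval hK x)) in w2.
  move: w1 w2. rewrite /eps. move: (absL (ap g x)) => w.
  unfold Rabs; case: Rcase_abs => ?; lra.
Qed.

Theorem mainTheorem17 :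
  (forall (X : Type) (op : (X -> Prop) -> Prop)
          (K : fieldType) (absK : K -> R) (L : fieldType) (absL : L -> R),
      is_topology op ->
      complete_nonarch_field absK -> complete_nonarch_field absL ->
      exists phi : BSC op absK -> BSC op absL,
        (bsc_homeomorphism phi /\ eval_compatible phi) /\
        (forall phi' : BSC op absK -> BSC op absL,
            bsc_homeomorphism phi' -> eval_compatible phi' ->
            forall s, phi' s = phi s)) /\
  (forall (X : Type) (op : (X -> Prop) -> Prop)
          (k : fieldType) (absk : k -> R) (K : fieldType) (absK : K -> R)
          (iota : {rmorphism k -> K}),
      is_topology op ->
      complete_nonarch_field absk -> complete_nonarch_field absK ->
      (forall c : k, absK (iota c) = absk c) ->
      exists phi : BSC op absK -> BSC op absk,
        bsc_homeomorphism phi /\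
        (forall (s : BSC op absK) (f : Cbd op absk) (g : Cbd op absK),
            (forall x, proj1_sig g x = iota (proj1_sig f x)) ->
            proj1_sig (phi s) f = proj1_sig s g)).
Proof.
  split.
  - move=> X op K absK L absL hop [hK _] [hL _].
    exists (phi hop hK hL). split.
    + split; [exact: phi_homeo | exact: phi_eval].
    + move=> phi' [psi [_ [_ [c' _]]]] ev' s. exact: phi_unique.
  - move=> X op k absk K absK iota hop [hk _] [hK _] hiota.
    exists (phi hop hK hk). split; first exact: phi_homeo.
    move=> s f g e /=.
    apply: (Char_unique hop hK (pval_char hop hK hk s f)).
    apply: (Char_ext (Char_s hop hK s g)) => x. by rewrite e hiota.
Qed.
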